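(* Let $\phi$ be an instance of \textsc{Max (2,3)-SAT} with $n$ variables and let $T_\phi$ be the tournament instance constructed from $\phi$ as described in the context. If $T_\phi$ has a seeding whose tournament value is at least $k+n$, then $\phi$ admits an assignment that satisfies at least $k$ clauses.
   Context: Tournament model: players form a finite set of size $2^{n'}$ totally ordered by strength (stronger beats weaker). A seeding is a bijection $\sigma$ from players to $[2^{n'}]$. In round $r=1,\dots,n'$, for each block of seed positions $\{(k-1)2^r+1,\dots,k2^r\}$, the winner $a$ of its first half $\{(k-1)2^r+1,\dots,(k-1)2^r+2^{r-1}\}$ plays the winner $b$ of its second half (a single-position block is won by the player seeded there), the stronger one wins the block, and the game has value $v(a,b)$ (values do not depend on the round). The tournament value is the sum of values of all games played. \textsc{Max (2,3)-SAT} instance: a CNF formula $\phi$ with variables $x_1,\dots,x_n$ and clauses $c_1,\dots,c_m$, each clause having exactly two literals and each variable appearing in at most three clauses. Construction of $T_\phi$: let $n'$ be the smallest integer with $16n\le 2^{n'}$ and $p=2^{n'}-16n$. Players: for each $i\in[n]$, variable players $x_i,x_i^T,x_i^F$ and special players $\widehat d_i,d_i,\widetilde d_i$; for each clause $c$, a clause player $c$; dummy players $f_1,\dots,f_{10n+p-m}$. Strength order (strongest first): $\widehat d_1>d_1>\widetilde d_1>\widehat d_2>d_2>\widetilde d_2>\dots>\widehat d_n>d_n>\widetilde d_n>x_1>x_1^T>x_1^F>\dots>x_n>x_n^T>x_n^F>c_1>\dots>c_m>f_1>\dots>f_{10n+p-m}$. Round-oblivious symmetric game values ($v(a,b)=v(b,a)$):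 for each $i$, $v(x_i,x_i^T)=v(x_i,x_i^F)=1$; for each clause $c$ containing a literal of variable $x$, $v(c,x^T)=1$ if $x$ appears non-negated in $c$ and $v(c,x^F)=1$ if it appears negated; for each $i$, $v(d_i,\widehat d_i)=v(d_i,\widetilde d_i)=v(d_i,x_i)=0$; for each $i$ and every player $Y$ for which the pair value has not been set above, $v(d_i,Y)=v(x_i,Y)=-5$; all remaining pairs have value $0$. Thus the values lie in $\{0,1,-5\}$. *)

(* Defs.v *)
From mathcomp Require Import all_boot all_order all_algebra all_fingroup.
Set Implicit Arguments. Unset Strict Implicit. Unset Printing Implicit Defensive.
Import Order.TTheory GRing.Theory Num.Theory.

(* A literal is (variable index, polarity); polarity true = non-negated.
   Variables are x_0, ..., x_{n-1} (0-indexed). *)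
Definition literal := (nat * bool)%type.
Definition clause := (literal * literal)%type.

Definition clause_has (c : clause) (l : literal) : bool := (c.1 == l) || (c.2 == l).
Definition clause_has_var (c : clause) (i : nat) : bool := (c.1.1 == i) || (c.2.1 == i).

Definition max23sat (n : nat) (phi : seq clause) : Prop :=
  (forall c, c \in phi -> [/\ c.1.1 < n, c.2.1 < n & c.1 != c.2]) /\
  (forall i, i < n -> count (fun c => clause_has_var c i) phi <= 3).

Definition lit_true (a : nat -> bool) (l : literal) : bool := a l.1 == l.2.
Definition clause_sat (a : nat -> bool) (c : clause) : bool :=
  lit_true a c.1 || lit_true a c.2.
Definition num_sat (a : nat -> bool) (phi : seq clause) : nat :=
  count (clause_sat a) phi.

(* n' = smallest integer with 16 n <= 2^n'  (up_log 2 m is the smallest e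
   with m <= 2^e). *)
Definition nprime (n : nat) : nat := up_log 2 (16 * n).

(* Players are identified with their strength rank r in [0, 2^n'), rank 0
   being the strongest.  Following the strength order of the paper:
     ranks 3i, 3i+1, 3i+2            : dhat_i, d_i, dtilde_i   (i < n)
     ranks 3n+3i, 3n+3i+1, 3n+3i+2   : x_i, x_i^T, x_i^F       (i < n)
     ranks 6n+j                      : clause player c_j       (j < m)
     ranks 6n+m+j                    : dummy player f_j        (j < 10n+p-m) *)
Inductive kind :=
| KDhat of nat | KD of nat | KDtil of nat
| KX of nat | KXT of nat | KXF of nat
| KC of nat | KF of nat.

Definition kind_of (n m r : nat) : kind :=
  if r < 3 * n then
    (if r %% 3 == 0 then KDhat (r %/ 3)
     else if r %% 3 == 1 then KD (r %/ 3) else KDtil (r %/ 3))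
  else if r < 6 * n then
    (let r' := r - 3 * n in
     if r' %% 3 == 0 then KX (r' %/ 3)
     else if r' %% 3 == 1 then KXT (r' %/ 3) else KXF (r' %/ 3))
  else if r < 6 * n + m then KC (r - 6 * n)
  else KF (r - 6 * n - m).

Definition clause_at (phi : seq clause) (j : nat) : clause :=
  nth ((0, true), (0, true)) phi j.

(* Values set explicitly by the first three rules (in one orientation). *)
Definition set_val (phi : seq clause) (a b : kind) : option int :=
  match a, b with
  | KX i, KXT j => if i == j then Some 1%R else None
  | KX i, KXF j => if i == j then Some 1%R else None
  | KC j, KXT i => if clause_has (clause_at phi j) (i, true) then Some 1%R else None
  | KC j, KXF i => if clause_has (clause_at phi j) (i, false) then Some 1%R else None
  | KD i, KDhat j => if i == j then Some 0%R else None
  | KD i, KDtil j => if i == j then Some 0%R else None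
  | KD i, KX j => if i == j then Some 0%R else None
  | _, _ => None
  end.

Definition is_d_or_x (a : kind) : bool :=
  match a with KD _ | KX _ => true | _ => false end.

Definition game_val (phi : seq clause) (a b : kind) : int :=
  match set_val phi a b, set_val phi b a with
  | Some z, _ => z
  | None, Some z => z
  | None, None => if is_d_or_x a || is_d_or_x b then (-5)%R else 0%R
  end.

Definition v_phi (n : nat) (phi : seq clause) (ra rb : nat) : int :=
  game_val phi (kind_of n (size phi) ra) (kind_of n (size phi) rb).

(* Tournament on 2^N' positions (0-indexed), [seat q] = rank of the player
   seated at position q.  [winner seat r k] = winner (the stronger, i.e. the
   smaller rank) of the k-th block of size 2^r, positions k 2^r .. (k+1) 2^r - 1. *)
Fixpoint winner (seat : nat -> nat) (r k : nat) : nat :=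
  match r with
  | 0 => seat k
  | r'.+1 => minn (winner seat r' k.*2) (winner seat r' k.*2.+1)
  end.

(* Sum of values of all games: in round r (1 <= r <= N'), block k (k < 2^(N'-r))
   is the game between the winners of blocks 2k and 2k+1 of round r-1. *)
Definition tourn_value (v : nat -> nat -> int) (N' : nat) (seat : nat -> nat) : int :=
  (\sum_(1 <= r < N'.+1) \sum_(0 <= k < 2 ^ (N' - r))
      v (winner seat r.-1 k.*2) (winner seat r.-1 k.*2.+1))%R.

(* A seeding sigma : players -> positions is a permutation of 'I_(2^n')
   (players identified with their ranks); the player at position q is sigma^-1 q. *)
Definition seat_of (N : nat) (sigma : {perm 'I_N}) (q : nat) : nat :=
  oapp (fun i : 'I_N => val ((sigma^-1)%g i)) 0 (insub q).

Definition T_value (n : nat) (phi : seq clause) (sigma : {perm 'I_(2 ^ nprime n)}) : int :=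
  tourn_value (v_phi n phi) (nprime n) (seat_of sigma).
Arguments T_value : clear implicits.

(* Main.v *)
Require Import Defs.
From mathcomp Require Import all_boot all_order all_algebra all_fingroup.
From mathcomp Require Import zify.
Import Order.TTheory GRing.Theory Num.Theory.
Set Implicit Arguments. Unset Strict Implicit. Unset Printing Implicit Defensive.

Lemma divS2 q r : q %/ 2 ^ r.+1 = (q %/ 2 ^ r) %/ 2.
Proof. by rewrite expnSr divnMA. Qed.

Lemma divD q r R : r <= R -> q %/ 2 ^ R = (q %/ 2 ^ r) %/ 2 ^ (R - r).
Proof. by move=> h; rewrite -divnMA -expnD subnKC. Qed.

Lemma half_cases t k : t %/ 2 = k -> t = k.*2 \/ t = k.*2.+1.
Proof. lia. Qed.

Lemma pos_lt N r0 q t : q %/ 2 ^ r0 = t -> t < 2 ^ (N - r0) -> r0 <= N -> q < 2 ^ N.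
Proof.
move=> <- h hr; rewrite ltn_divLR ?expn_gt0 // -expnD subnK // in h.
Qed.

Lemma exp_sub2 N r0 : r0 < N -> 2 ^ (N - r0) = (2 ^ (N - r0.+1)).*2.
Proof. by move=> h; rewrite -mul2n -expnS subnSK. Qed.

Section Tourn.
Variable seat : nat -> nat.
Local Notation W := (winner seat).

Lemma W_le r k q : q %/ 2 ^ r = k -> W r k <= seat q.
Proof.
elim: r k q => [|r IH] k q /=; first by rewrite expn0 divn1 => ->.
rewrite divS2 => /half_cases [] h.
- by rewrite geq_min (IH _ _ h).
- by rewrite geq_min (IH _ _ h) orbT.
Qed.

Lemma W_ex r k : exists q, q %/ 2 ^ r = k /\ W r k = seat q.
Proof.
elim: r k => [|r IH] k /=; first by exists k; rewrite expn0 divn1.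
have [q1 [h1 e1]] := IH k.*2; have [q2 [h2 e2]] := IH k.*2.+1.
case: (leqP (W r k.*2) (W r k.*2.+1)) => h.
- exists q1; split; first by rewrite divS2 h1; lia.
  by [].
- exists q2; split; first by rewrite divS2 h2; lia.
  by [].
Qed.

Lemma W_mono r R q : r <= R -> W R (q %/ 2 ^ R) = seat q -> W r (q %/ 2 ^ r) = seat q.
Proof.
move=> hr e.
have [q' [h1 h2]] := W_ex r (q %/ 2 ^ r).
have h3 : W R (q %/ 2 ^ R) <= seat q'.
  apply: W_le; by rewrite (divD q' hr) h1 -divD.
have h4 := W_le (erefl (q %/ 2 ^ r)).
apply/eqP; rewrite eqn_leq h4 /= h2 -e //.
Qed.

End Tourn.
Section Kinds.
Variables (n m : nat).
Local Notation kd := (kind_of n m).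

Ltac kinv := rewrite /kind_of; repeat case: ifPn; move=> *; (try discriminate);
  match goal with H : ?C _ = ?C _ |- _ => injection H; lia end.

Lemma kDhat r i : kd r = KDhat i -> r = 3 * i /\ i < n. Proof. kinv. Qed.
Lemma kD r i : kd r = KD i -> r = 3 * i + 1 /\ i < n. Proof. kinv. Qed.
Lemma kDtil r i : kd r = KDtil i -> r = 3 * i + 2 /\ i < n. Proof. kinv. Qed.
Lemma kX r i : kd r = KX i -> r = 3 * n + 3 * i /\ i < n. Proof. kinv. Qed.
Lemma kXT r i : kd r = KXT i -> r = 3 * n + 3 * i + 1 /\ i < n. Proof. kinv. Qed.
Lemma kXF r i : kd r = KXF i -> r = 3 * n + 3 * i + 2 /\ i < n. Proof. kinv. Qed.
Lemma kC r j : kd r = KC j -> r = 6 * n + j /\ j < m. Proof. kinv. Qed.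
Lemma kF r j : kd r = KF j -> 6 * n + m <= r. Proof. kinv. Qed.
End Kinds.
Section Vals.
Variable phi : seq clause.
Local Notation gv := (game_val phi).

Lemma set_val_cases x y : set_val phi x y = None \/ set_val phi x y = Some 1%R \/ set_val phi x y = Some 0%R.
Proof. case: x => a; case: y => b /=; repeat case: ifP => _; auto. Qed.

Lemma gv_cases x y : gv x y = 1%R \/ gv x y = 0%R \/ gv x y = (-5)%R.
Proof.
rewrite /game_val.
case: (set_val_cases x y) => [->|[->|->]]; auto.
case: (set_val_cases y x) => [->|[->|->]]; auto.
by case: ifP; auto.
Qed.

Definition isAT i x y := match x, y with KX a, KXT b | KXT b, KX a => (a == i) && (b == i) | _, _ => false end.
Definition isAF i x y := match x, y with KX a, KXF b | KXF b, KX a => (a == i) && (b == i) | _, _ => false end.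
Definition isT i x y := match x, y with KXT b, KC j | KC j, KXT b => (b == i) && clause_has (clause_at phi j) (i, true) | _, _ => false end.
Definition isF i x y := match x, y with KXF b, KC j | KC j, KXF b => (b == i) && clause_has (clause_at phi j) (i, false) | _, _ => false end.

Lemma pos_class x y : gv x y = 1%R -> exists i, [|| isAT i x y, isAF i x y, isT i x y | isF i x y].
Proof.
case: x => a; case: y => b; rewrite /game_val /=; repeat case: ifP => //; intros;
 repeat match goal with H : is_true (_ == _) |- _ => move/eqP: H => H; subst end;
 first [by exists a; rewrite /= ?eqxx /= ?orbT ?orbF | by exists b; rewrite /= ?eqxx /= ?orbT ?orbF | idtac].
Qed.
End Vals.

Section Neg.
Variables (n : nat) (phi : seq clause).
Local Notation K := (kind_of n (size phi)).
Local Notation gv := (game_val phi).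

Ltac inv e := first [ move: (kDhat e) => [? ?] | move: (kD e) => [? ?] | move: (kDtil e) => [? ?]
  | move: (kX e) => [? ?] | move: (kXT e) => [? ?] | move: (kXF e) => [? ?]
  | move: (kC e) => [? ?] | move: (kF e) => ?].

Ltac fin := rewrite /game_val /=; repeat (case: eqP => [?|?] /=); subst; try congruence; try lia; split => //.

Lemma negX_up a b i : K a = KX i -> a < b -> K b <> KXT i -> K b <> KXF i ->
  gv (K a) (K b) = (-5)%R /\ gv (K b) (K a) = (-5)%R.
Proof.
move=> ha hab hT hF; move: (kX ha) => [? ?]; rewrite ha.
case e: (K b) => [j|j|j|j|j|j|j|j]; rewrite e in hT hF; inv e; try lia; fin.
Qed.

Lemma negX_down a b i : K a = KX i -> b < a -> K b <> KD i ->
  gv (K a) (K b) = (-5)%R /\ gv (K b) (K a) = (-5)%R.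
Proof.
move=> ha hab hD; move: (kX ha) => [? ?]; rewrite ha.
case e: (K b) => [j|j|j|j|j|j|j|j]; rewrite e in hD; inv e; try lia; fin.
Qed.

Lemma negD_up a b i : K a = KD i -> a < b -> K b <> KDtil i -> K b <> KX i ->
  gv (K a) (K b) = (-5)%R /\ gv (K b) (K a) = (-5)%R.
Proof.
move=> ha hab hT hX; move: (kD ha) => [? ?]; rewrite ha.
case e: (K b) => [j|j|j|j|j|j|j|j]; rewrite e in hT hX; inv e; try lia; fin.
Qed.
End Neg.

Definition pa (seat : nat -> nat) r0 k := winner seat r0 k.*2.
Definition pb (seat : nat -> nat) r0 k := winner seat r0 k.*2.+1.
Definition lo seat r0 k := maxn (pa seat r0 k) (pb seat r0 k).
Definition wn seat r0 k := minn (pa seat r0 k) (pb seat r0 k).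
Definition valid N r0 k := (r0 < N) && (k < 2 ^ (N - r0.+1)).

Lemma div_lt N r q : q < 2 ^ N -> r < N -> q %/ 2 ^ r.+1 < 2 ^ (N - r.+1).
Proof. move=> hq hr; rewrite ltn_divLR ?expn_gt0 // -expnD subnK //. Qed.

Section Games.
Variables (seat : nat -> nat) (N : nat).
Hypothesis inj : forall q q', q < 2 ^ N -> q' < 2 ^ N -> seat q = seat q' -> q = q'.
Local Notation W := (winner seat).

Lemma wnW r0 k : W r0.+1 k = wn seat r0 k. Proof. by []. Qed.

Lemma game_pos r0 k p : valid N r0 k -> (p = pa seat r0 k \/ p = pb seat r0 k) ->
  exists q, [/\ q < 2 ^ N, seat q = p, W r0 (q %/ 2 ^ r0) = p & q %/ 2 ^ r0.+1 = k].
Proof.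
move=> /andP [h1 h2] [->|->];
  [have [q [hq e]] := W_ex seat r0 k.*2 | have [q [hq e]] := W_ex seat r0 k.*2.+1];
  exists q; split.
- apply: (pos_lt hq _ (ltnW h1)); rewrite exp_sub2 //; lia.
- by rewrite /pa e.
- by rewrite hq.
- by rewrite divS2 hq; lia.
- apply: (pos_lt hq _ (ltnW h1)); rewrite exp_sub2 //; lia.
- by rewrite /pb e.
- by rewrite hq.
- by rewrite divS2 hq; lia.
Qed.

Lemma pab_ne r0 k : valid N r0 k -> pa seat r0 k <> pb seat r0 k.
Proof.
move=> hv; move: (hv) => /andP [h1 h2].
have [qa [ha ea]] := W_ex seat r0 k.*2; have [qb [hb eb]] := W_ex seat r0 k.*2.+1.
rewrite /pa /pb ea eb => e.
have qa_lt : qa < 2 ^ N by apply: (pos_lt ha _ (ltnW h1)); rewrite exp_sub2 //; lia.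
have qb_lt : qb < 2 ^ N by apply: (pos_lt hb _ (ltnW h1)); rewrite exp_sub2 //; lia.
have := inj qa_lt qb_lt e => eq; subst; lia.
Qed.

Lemma lo_cases r0 k : lo seat r0 k = pa seat r0 k \/ lo seat r0 k = pb seat r0 k.
Proof. rewrite /lo; lia. Qed.
Lemma wn_cases r0 k : wn seat r0 k = pa seat r0 k \/ wn seat r0 k = pb seat r0 k.
Proof. rewrite /wn; lia. Qed.
Lemma wn_lt_lo r0 k : valid N r0 k -> wn seat r0 k < lo seat r0 k.
Proof. move=> /pab_ne; rewrite /wn /lo; lia. Qed.

Lemma lo_not_alive r0 k p q : valid N r0 k -> q < 2 ^ N -> seat q = p ->
  W r0.+1 (q %/ 2 ^ r0.+1) = p -> lo seat r0 k <> p.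
Proof.
move=> hv hq sq wq e.
have [q' [hq' sq' wq' kq']] := game_pos hv (lo_cases r0 k).
have eq : q = q' by apply: inj => //; rewrite sq sq' e.
subst q'; move: wq; rewrite kq' wnW => h.
have := wn_lt_lo hv; rewrite h e; lia.
Qed.

Lemma lo_unique r0 k r0' k' : valid N r0 k -> valid N r0' k' ->
  lo seat r0 k = lo seat r0' k' -> r0 = r0' /\ k = k'.
Proof.
move=> hv hv' e.
have [q [hq sq wq kq]] := game_pos hv (lo_cases r0 k).
have [q' [hq' sq' wq' kq']] := game_pos hv' (lo_cases r0' k').
have eq : q = q' by apply: inj => //; rewrite sq sq' e.
subst q'.
case: (ltngtP r0 r0') => h.
- exfalso; apply: (lo_not_alive hv hq sq) => //.
  by rewrite -sq; apply: (W_mono h); rewrite wq' sq e.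
- exfalso; apply: (lo_not_alive hv' hq sq') => //.
  by rewrite -sq'; apply: (W_mono h); rewrite wq sq' e.
- by subst; split => //; rewrite -kq -kq'.
Qed.

Lemma wn_alive r0 k : valid N r0 k -> exists q, [/\ q < 2 ^ N, seat q = wn seat r0 k &
  W r0.+1 (q %/ 2 ^ r0.+1) = wn seat r0 k].
Proof.
move=> hv; have [q [hq sq wq kq]] := game_pos hv (wn_cases r0 k).
by exists q; split => //; rewrite kq.
Qed.

Lemma search (P : nat -> bool) L M : P L -> ~~ P M -> L <= M -> exists R, [/\ L <= R, R < M, P R & ~~ P R.+1].
Proof.
elim: M => [|M IH] hL hM hLM.
- have e : L = 0 by lia. by subst; rewrite hL in hM.
- have hne : L != M.+1 by apply/eqP => e; subst; rewrite hL in hM.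
  case: (boolP (P M)) => hPM.
  + exists M; split => //; lia.
  + have hLM' : L <= M by lia.
    have [R [? ? ? ?]] := IH hL hPM hLM'. exists R; split => //; lia.
Qed.

End Games.

Definition XD i (x : kind) := match x with KX a | KD a => a == i | _ => false end.

Section Main.
Variables (n : nat) (phi : seq clause) (N : nat) (seat : nat -> nat).
Hypothesis inj : forall q q', q < 2 ^ N -> q' < 2 ^ N -> seat q = seat q' -> q = q'.
Hypothesis top : exists q0, q0 < 2 ^ N /\ seat q0 = 0.
Local Notation K := (kind_of n (size phi)).
Local Notation W := (winner seat).
Local Notation gv := (game_val phi).

Definition vv r0 k := gv (K (pa seat r0 k)) (K (pb seat r0 k)).
Definition pen i r0 k := (vv r0 k == (-5)%R) && (XD i (K (pa seat r0 k)) || XD i (K (pb seat r0 k))).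

Lemma pen_wl i r0 k : gv (K (wn seat r0 k)) (K (lo seat r0 k)) = (-5)%R ->
  gv (K (lo seat r0 k)) (K (wn seat r0 k)) = (-5)%R ->
  XD i (K (wn seat r0 k)) || XD i (K (lo seat r0 k)) -> pen i r0 k.
Proof.
rewrite /pen /vv /wn /lo; case: leqP => h e1 e2 hx; apply/andP; split.
- by rewrite e1.
- by [].
- by rewrite e2.
- by rewrite orbC.
Qed.

Ltac kinvs := repeat match goal with
  | H : kind_of _ _ _ = KX _ |- _ => move: (kX H) => [? ?]; move: H
  | H : kind_of _ _ _ = KXT _ |- _ => move: (kXT H) => [? ?]; move: H
  | H : kind_of _ _ _ = KXF _ |- _ => move: (kXF H) => [? ?]; move: H
  | H : kind_of _ _ _ = KC _ |- _ => move: (kC H) => [? ?]; move: H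
  end; intros.

Lemma isAT_wl r0 k i : isAT i (K (pa seat r0 k)) (K (pb seat r0 k)) ->
  K (wn seat r0 k) = KX i /\ K (lo seat r0 k) = KXT i.
Proof.
rewrite /wn /lo; case ea: (K (pa seat r0 k)) => [a|a|a|a|a|a|a|a];
  case eb: (K (pb seat r0 k)) => [b|b|b|b|b|b|b|b] //= /andP [/eqP ? /eqP ?]; subst;
  kinvs; case: leqP => h; first [by rewrite ea eb | exfalso; lia].
Qed.

Lemma isAF_wl r0 k i : isAF i (K (pa seat r0 k)) (K (pb seat r0 k)) ->
  K (wn seat r0 k) = KX i /\ K (lo seat r0 k) = KXF i.
Proof.
rewrite /wn /lo; case ea: (K (pa seat r0 k)) => [a|a|a|a|a|a|a|a];
  case eb: (K (pb seat r0 k)) => [b|b|b|b|b|b|b|b] //= /andP [/eqP ? /eqP ?]; subst;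
  kinvs; case: leqP => h; first [by rewrite ea eb | exfalso; lia].
Qed.

Lemma isT_wl r0 k i : isT phi i (K (pa seat r0 k)) (K (pb seat r0 k)) ->
  K (wn seat r0 k) = KXT i /\ exists j, [/\ K (lo seat r0 k) = KC j, j < size phi &
     clause_has (clause_at phi j) (i, true)].
Proof.
rewrite /wn /lo; case ea: (K (pa seat r0 k)) => [a|a|a|a|a|a|a|a];
  case eb: (K (pb seat r0 k)) => [b|b|b|b|b|b|b|b] //= /andP [/eqP ? hc]; subst;
  kinvs; case: leqP => h; first [by rewrite ea eb; split => //; eexists; split; eauto | exfalso; lia].
Qed.

Lemma isF_wl r0 k i : isF phi i (K (pa seat r0 k)) (K (pb seat r0 k)) ->
  K (wn seat r0 k) = KXF i /\ exists j, [/\ K (lo seat r0 k) = KC j, j < size phi &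
     clause_has (clause_at phi j) (i, false)].
Proof.
rewrite /wn /lo; case ea: (K (pa seat r0 k)) => [a|a|a|a|a|a|a|a];
  case eb: (K (pb seat r0 k)) => [b|b|b|b|b|b|b|b] //= /andP [/eqP ? hc]; subst;
  kinvs; case: leqP => h; first [by rewrite ea eb; split => //; eexists; split; eauto | exfalso; lia].
Qed.

End Main.

Lemma kind_dec (x y : kind) : x = y \/ x <> y.
Proof. have : {x = y} + {x <> y} by decide equality; apply: PeanoNat.Nat.eq_dec. by case; auto. Qed.

Section Cases.
Variables (n : nat) (phi : seq clause) (N : nat) (seat : nat -> nat).
Hypothesis inj : forall q q', q < 2 ^ N -> q' < 2 ^ N -> seat q = seat q' -> q = q'.
Hypothesis top : exists q0, q0 < 2 ^ N /\ seat q0 = 0.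
Local Notation K := (kind_of n (size phi)).
Local Notation W := (winner seat).
Local Notation gv := (game_val phi).

Lemma x_pos i p : K p = KX i -> 0 < p.
Proof. by move/kX => [-> ?]; lia. Qed.

Lemma not_top p q : q < 2 ^ N -> 0 < p -> ~~ (W N (q %/ 2 ^ N) == p).
Proof.
move=> hq hp; rewrite divn_small //.
have [q0 [h0 s0]] := top.
have := W_le seat (divn_small h0); rewrite s0; lia.
Qed.

Lemma caseB i r1 k1 r2 k2 : valid N r1 k1 -> isAT i (K (pa seat r1 k1)) (K (pb seat r1 k1)) ->
  valid N r2 k2 -> isAF i (K (pa seat r2 k2)) (K (pb seat r2 k2)) ->
  exists r0 k, valid N r0 k /\ pen n phi seat i r0 k.
Proof.
move=> v1 h1 v2 h2.
have [wx1 ly1] := isAT_wl h1; have [wx2 ly2] := isAF_wl h2.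
have ex : wn seat r1 k1 = wn seat r2 k2 by move: (kX wx1) (kX wx2) => [-> _] [-> _].
have [r [k [vr hr wxr]]] : exists r k, [/\ valid N r k, 0 < r & K (wn seat r k) = KX i].
  case: (posnP r1) => hr1; last by exists r1, k1.
  case: (posnP r2) => hr2; last by exists r2, k2.
  exfalso; subst r1 r2.
  have [q [hq sq _ kq]] := game_pos v1 (wn_cases seat 0 k1).
  have [q' [hq' sq' _ kq']] := game_pos v2 (wn_cases seat 0 k2).
  have eq : q = q' by apply: inj => //; rewrite sq sq' ex.
  subst q'; rewrite kq in kq'; subst k2.
  by rewrite ly1 in ly2.
have [qx [hqx sqx wqx]] := wn_alive seat vr.
have vr' := vr; move/andP: vr' => [hrN _].
have [R [hR1 hR2 hPR hPR1]] := @search (fun L => W L (qx %/ 2 ^ L) == wn seat r k) r.+1 N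
   (introT eqP wqx) (not_top hqx (x_pos wxr)) hrN.
move/eqP: hPR => hPR.
have vR : valid N R (qx %/ 2 ^ R.+1) by rewrite /valid hR2 div_lt.
have hx_pl : wn seat r k = pa seat R (qx %/ 2 ^ R.+1) \/ wn seat r k = pb seat R (qx %/ 2 ^ R.+1).
  rewrite /pa /pb -hPR divS2.
  by case: (half_cases (erefl ((qx %/ 2 ^ R) %/ 2))) => e; [left|right]; rewrite {1}e.
have hw : wn seat R (qx %/ 2 ^ R.+1) <> wn seat r k by move/eqP: hPR1.
have hlo : lo seat R (qx %/ 2 ^ R.+1) = wn seat r k by move: hx_pl hw; rewrite /lo /wn; lia.
have hz := wn_lt_lo inj vR.
case: (kind_dec (K (wn seat R (qx %/ 2 ^ R.+1))) (KD i)) => hD; last first.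
  have hk : K (lo seat R (qx %/ 2 ^ R.+1)) = KX i by rewrite hlo.
  have [e1 e2] := @negX_down n phi (lo seat R (qx %/ 2 ^ R.+1)) (wn seat R (qx %/ 2 ^ R.+1)) i
     hk hz hD.
  exists R, (qx %/ 2 ^ R.+1); split => //; apply: pen_wl e2 e1 _.
  by rewrite hlo wxr /= eqxx orbT.
have [qd [hqd sqd wqd]] := wn_alive seat vR.
have w1 : W 1 (qd %/ 2 ^ 1) = wn seat R (qx %/ 2 ^ R.+1).
  by rewrite -sqd; apply: (@W_mono seat 1 R.+1) => //; rewrite sqd.
have w2 : W 2 (qd %/ 2 ^ 2) = wn seat R (qx %/ 2 ^ R.+1).
  by rewrite -sqd; apply: (@W_mono seat 2 R.+1); [lia | rewrite sqd].
have v1' : valid N 0 (qd %/ 2 ^ 1) by rewrite /valid div_lt //; lia.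
have v2' : valid N 1 (qd %/ 2 ^ 2) by rewrite /valid div_lt //; lia.
have wz1 : wn seat 0 (qd %/ 2 ^ 1) = wn seat R (qx %/ 2 ^ R.+1) := w1.
have wz2 : wn seat 1 (qd %/ 2 ^ 2) = wn seat R (qx %/ 2 ^ R.+1) := w2.
have xa1 : W 1 (qx %/ 2 ^ 1) = wn seat r k.
  by rewrite -sqx; apply: (@W_mono seat 1 R); [lia | rewrite sqx].
have xa2 : W 2 (qx %/ 2 ^ 2) = wn seat r k.
  by rewrite -sqx; apply: (@W_mono seat 2 R); [lia | rewrite sqx].
have n1x : lo seat 0 (qd %/ 2 ^ 1) <> wn seat r k := lo_not_alive inj v1' hqx sqx xa1.
have n2x : lo seat 1 (qd %/ 2 ^ 2) <> wn seat r k := lo_not_alive inj v2' hqx sqx xa2.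
have n12 : lo seat 0 (qd %/ 2 ^ 1) <> lo seat 1 (qd %/ 2 ^ 2).
  have [q2 [hq2 sq2 wq2 _]] := game_pos v2' (lo_cases seat 1 (qd %/ 2 ^ 2)).
  exact: (lo_not_alive inj v1' hq2 sq2 wq2).
have lt1 := wn_lt_lo inj v1'; have lt2 := wn_lt_lo inj v2'.
have nX1 : K (lo seat 0 (qd %/ 2 ^ 1)) <> KX i.
  by move=> e; apply: n1x; move: (kX e) (kX wxr) => [-> _] [-> _].
have nX2 : K (lo seat 1 (qd %/ 2 ^ 2)) <> KX i.
  by move=> e; apply: n2x; move: (kX e) (kX wxr) => [-> _] [-> _].
case: (kind_dec (K (lo seat 0 (qd %/ 2 ^ 1))) (KDtil i)) => hT1; last first.
  have hk : K (wn seat 0 (qd %/ 2 ^ 1)) = KD i by rewrite wz1.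
  have [e1 e2] := @negD_up n phi (wn seat 0 (qd %/ 2 ^ 1)) (lo seat 0 (qd %/ 2 ^ 1)) i
     hk lt1 hT1 nX1.
  exists 0, (qd %/ 2 ^ 1); split => //; apply: pen_wl e1 e2 _.
  by rewrite wz1 hD /= eqxx.
case: (kind_dec (K (lo seat 1 (qd %/ 2 ^ 2))) (KDtil i)) => hT2; last first.
  have hk : K (wn seat 1 (qd %/ 2 ^ 2)) = KD i by rewrite wz2.
  have [e1 e2] := @negD_up n phi (wn seat 1 (qd %/ 2 ^ 2)) (lo seat 1 (qd %/ 2 ^ 2)) i
     hk lt2 hT2 nX2.
  exists 1, (qd %/ 2 ^ 2); split => //; apply: pen_wl e1 e2 _.
  by rewrite wz2 hD /= eqxx.
by exfalso; apply: n12; move: (kDtil hT1) (kDtil hT2) => [-> _] [-> _].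
Qed.

Lemma caseA i r1 k1 rT kT rF kF : valid N r1 k1 ->
  isAT i (K (pa seat r1 k1)) (K (pb seat r1 k1)) || isAF i (K (pa seat r1 k1)) (K (pb seat r1 k1)) ->
  valid N rT kT -> isT phi i (K (pa seat rT kT)) (K (pb seat rT kT)) ->
  valid N rF kF -> isF phi i (K (pa seat rF kF)) (K (pb seat rF kF)) ->
  exists r0 k, valid N r0 k /\ pen n phi seat i r0 k.
Proof.
move=> v1 h1 vT hT vF hF.
have [wx ly] : K (wn seat r1 k1) = KX i /\
    (K (lo seat r1 k1) = KXT i \/ K (lo seat r1 k1) = KXF i).
  case/orP: h1 => h.
    by have [? ?] := isAT_wl h; auto.
  by have [? ?] := isAF_wl h; auto.
have [wT _] := isT_wl hT; have [wF _] := isF_wl hF.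
have [qT [hqT sqT wqT]] := wn_alive seat vT.
have [qF [hqF sqF wqF]] := wn_alive seat vF.
have aT : W 1 (qT %/ 2 ^ 1) = wn seat rT kT.
  by rewrite -sqT; apply: (@W_mono seat 1 rT.+1) => //; rewrite sqT.
have aF : W 1 (qF %/ 2 ^ 1) = wn seat rF kF.
  by rewrite -sqF; apply: (@W_mono seat 1 rF.+1) => //; rewrite sqF.
have hr1 : 0 < r1.
  case: (posnP r1) => // e; subst r1; exfalso.
  case: ly => e.
  - apply: (lo_not_alive inj v1 hqT sqT aT).
    by move: (kXT e) (kXT wT) => [-> _] [-> _].
  - apply: (lo_not_alive inj v1 hqF sqF aF).
    by move: (kXF e) (kXF wF) => [-> _] [-> _].
have [qx [hqx sqx wqx]] := wn_alive seat v1.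
have ax : W 1 (qx %/ 2 ^ 1) = wn seat r1 k1.
  by rewrite -sqx; apply: (@W_mono seat 1 r1.+1) => //; rewrite sqx.
have v1' := v1; move/andP: v1' => [hr1N _].
have v0 : valid N 0 (qx %/ 2 ^ 1) by rewrite /valid div_lt //; lia.
have w0 : wn seat 0 (qx %/ 2 ^ 1) = wn seat r1 k1 := ax.
have nT : lo seat 0 (qx %/ 2 ^ 1) <> wn seat rT kT := lo_not_alive inj v0 hqT sqT aT.
have nF : lo seat 0 (qx %/ 2 ^ 1) <> wn seat rF kF := lo_not_alive inj v0 hqF sqF aF.
have lt0 := wn_lt_lo inj v0.
exists 0, (qx %/ 2 ^ 1); split => //.
have hk : K (wn seat 0 (qx %/ 2 ^ 1)) = KX i by rewrite w0.
have hT' : K (lo seat 0 (qx %/ 2 ^ 1)) <> KXT i.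
  by move=> e; apply: nT; move: (kXT e) (kXT wT) => [-> _] [-> _].
have hF' : K (lo seat 0 (qx %/ 2 ^ 1)) <> KXF i.
  by move=> e; apply: nF; move: (kXF e) (kXF wF) => [-> _] [-> _].
have [e1 e2] := @negX_up n phi (wn seat 0 (qx %/ 2 ^ 1)) (lo seat 0 (qx %/ 2 ^ 1)) i
  hk lt0 hT' hF'.
apply: pen_wl e1 e2 _; by rewrite w0 wx /= eqxx.
Qed.

End Cases.

Lemma tv_sum (v : nat -> nat -> int) N seat : tourn_value v N seat =
  (\sum_(g : 'I_N * 'I_(2 ^ N) | valid N g.1 g.2) v (pa seat g.1 g.2) (pb seat g.1 g.2))%R.
Proof.
rewrite /tourn_value big_add1 /= big_mkord.
transitivity (\sum_(i < N) \sum_(j < 2 ^ N | (j < 2 ^ (N - i.+1))%N) v (pa seat i j) (pb seat i j))%R.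
  apply: eq_bigr => i _.
  rewrite (big_nat_widen _ _ (2 ^ N)); last by rewrite leq_pexp2l // leq_subr.
  by rewrite big_mkord.
rewrite pair_big_dep; apply: eq_bigl => g /=; by rewrite /valid ltn_ord.
Qed.

Lemma sum_pos (T : finType) (V P : pred T) x : V x -> P x -> 0 < \sum_(y | V y) (P y : nat).
Proof. by move=> hv hp; rewrite (bigD1 x) //= hp. Qed.

Lemma sum_ex (T : finType) (V P : pred T) : 0 < \sum_(y | V y) (P y : nat) -> exists x, V x /\ P x.
Proof.
case: (boolP [exists x, V x && P x]) => [/existsP [x /andP [? ?]] _ | /existsPn h]; first by exists x.
by rewrite big1 // => y hv; move: (h y); rewrite hv /=; case: (P y).
Qed.

Lemma sum_le1 (T : finType) (V P : pred T) :
  (forall x y, V x -> V y -> P x -> P y -> x = y) -> \sum_(y | V y) (P y : nat) <= 1.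
Proof.
move=> U; case: (boolP [exists x, V x && P x]) => [/existsP [x /andP [hv hp]] | /existsPn h].
- rewrite (bigD1 x) //= hp big1 // => y /andP [hvy hne].
  case hpy: (P y) => //; by rewrite (U _ _ hvy hv hpy hp) eqxx in hne.
- by rewrite big1 // => y hv; move: (h y); rewrite hv /=; case: (P y).
Qed.

Lemma count_idx (p : pred clause) (s : seq clause) :
  count p s = \sum_(j < size s) (p (clause_at s j) : nat).
Proof.
rewrite -sum1_count (big_nth ((0, true), (0, true))) big_mkord big_mkcond.
by apply: eq_bigr => j _; rewrite /clause_at; case: (p _).
Qed.

Lemma clause_has_sat (a : nat -> bool) c b i : clause_has c (i, b) -> a i = b -> clause_sat a c.
Proof.
rewrite /clause_has /clause_sat /lit_true => /orP [] /eqP -> /= ->; by rewrite eqxx ?orbT.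
Qed.

Lemma clause_has_var_of c l : clause_has c l -> clause_has_var c l.1.
Proof. by rewrite /clause_has /clause_has_var => /orP [] /eqP -> ; rewrite eqxx ?orbT. Qed.

Lemma XD_uniq x i i' : XD i x -> XD i' x -> i = i'.
Proof. by case: x => // a /eqP <- /eqP. Qed.

Section Count.
Variables (n : nat) (phi : seq clause) (N : nat) (seat : nat -> nat).
Hypothesis inj : forall q q', q < 2 ^ N -> q' < 2 ^ N -> seat q = seat q' -> q = q'.
Hypothesis top : exists q0, q0 < 2 ^ N /\ seat q0 = 0.
Hypothesis hdeg : forall i, i < n -> count (fun c => clause_has_var c i) phi <= 3.
Local Notation K := (kind_of n (size phi)).
Local Notation G := ('I_N * 'I_(2 ^ N))%type.
Local Notation Ka g := (K (pa seat g.1 g.2)).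
Local Notation Kb g := (K (pb seat g.1 g.2)).
Local Notation V g := (valid N g.1 g.2).

Definition AT i := \sum_(g : G | V g) (isAT i (Ka g) (Kb g) : nat).
Definition AF i := \sum_(g : G | V g) (isAF i (Ka g) (Kb g) : nat).
Definition TT i := \sum_(g : G | V g) (isT phi i (Ka g) (Kb g) : nat).
Definition FF i := \sum_(g : G | V g) (isF phi i (Ka g) (Kb g) : nat).
Definition asg i := FF i <= TT i.
Definition need i := 2 <= AT i + AF i + minn (TT i) (FF i).

Lemma G_eq (g g' : G) : (g.1 : nat) = g'.1 -> (g.2 : nat) = g'.2 -> g = g'.
Proof. by case: g g' => [r k] [r' k'] /= h1 h2; congr pair; apply: val_inj. Qed.

Lemma mkG r0 k : valid N r0 k -> exists g : G, (g.1 : nat) = r0 /\ (g.2 : nat) = k.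
Proof.
move=> hv; move/andP: (hv) => [h1 h2].
have h3 : k < 2 ^ N by apply: (leq_trans h2); rewrite leq_pexp2l // leq_subr.
by exists (Ordinal h1, Ordinal h3).
Qed.

Lemma lo_uniqG (g g' : G) : V g -> V g' -> lo seat g.1 g.2 = lo seat g'.1 g'.2 -> g = g'.
Proof. by move=> v v' e; have [h1 h2] := lo_unique inj v v' e; apply: G_eq. Qed.

Lemma AT_le1 i : AT i <= 1.
Proof.
apply: sum_le1 => g g' v v' h h'; apply: lo_uniqG v v' _.
have [_ l] := isAT_wl h; have [_ l'] := isAT_wl h'.
by move: (kXT l) (kXT l') => [-> _] [-> _].
Qed.

Lemma AF_le1 i : AF i <= 1.
Proof.
apply: sum_le1 => g g' v v' h h'; apply: lo_uniqG v v' _.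
have [_ l] := isAF_wl h; have [_ l'] := isAF_wl h'.
by move: (kXF l) (kXF l') => [-> _] [-> _].
Qed.

Lemma lo_count (b : nat -> bool) j : \sum_(g : G | V g) (b j && (lo seat g.1 g.2 == 6 * n + j) : nat) <= b j.
Proof.
case: (b j) => /=; last by rewrite big1.
by apply: sum_le1 => g g' v v' /eqP e /eqP e'; apply: lo_uniqG v v' _; rewrite e e'.
Qed.

Lemma TF_le3 i : i < n -> TT i + FF i <= 3.
Proof.
move=> hi; rewrite /TT /FF -big_split /=.
apply: (@leq_trans (\sum_(g : G | V g) \sum_(j < size phi)
   (clause_has_var (clause_at phi j) i && (lo seat g.1 g.2 == 6 * n + j) : nat))).
  apply: leq_sum => g v.
  case hT: (isT phi i _ _); case hF: (isF phi i _ _) => //=.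
  - exfalso; have [w1 _] := isT_wl hT; have [w2 _] := isF_wl hF; by rewrite w1 in w2.
  - have [_ [j [l hj hc]]] := isT_wl hT.
    apply: (@sum_pos _ xpredT _ (Ordinal hj)) => //=.
    by rewrite (clause_has_var_of hc) (kC l).1 eqxx.
  - have [_ [j [l hj hc]]] := isF_wl hF.
    apply: (@sum_pos _ xpredT _ (Ordinal hj)) => //=.
    by rewrite (clause_has_var_of hc) (kC l).1 eqxx.
rewrite exchange_big /=.
apply: (@leq_trans (\sum_(j < size phi) (clause_has_var (clause_at phi j) i : nat))).
  apply: leq_sum => j _.
  exact: (lo_count (fun j => clause_has_var (clause_at phi j) i)).
by move/(_ i hi): hdeg; rewrite count_idx.
Qed.

Lemma SAT_le : \sum_(i < n) (if asg i then TT i else FF i) <= num_sat asg phi.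
Proof.
have eq : forall i, (if asg i then TT i else FF i) =
   \sum_(g : G | V g) ((if asg i then isT phi i (Ka g) (Kb g) else isF phi i (Ka g) (Kb g)) : nat).
  by move=> i; case: (asg i).
rewrite (eq_bigr (fun i : 'I_n => \sum_(g : G | V g) ((if asg i then isT phi i (Ka g) (Kb g) else isF phi i (Ka g) (Kb g)) : nat)) (fun i _ => eq i)).
rewrite exchange_big /=.
apply: (@leq_trans (\sum_(g : G | V g) \sum_(j < size phi)
   (clause_sat asg (clause_at phi j) && (lo seat g.1 g.2 == 6 * n + j) : nat))).
  apply: leq_sum => g v.
  have le1 : \sum_(i < n) ((if asg i then isT phi i (Ka g) (Kb g) else isF phi i (Ka g) (Kb g)) : nat) <= 1.
    apply: sum_le1 => i i' _ _ h h'; apply: val_inj => /=.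
    move: h h'; case: (asg i); case: (asg i') => h h'.
    - by move: (isT_wl h) (isT_wl h') => [w1 _] [w2 _]; rewrite w1 in w2; congruence.
    - by move: (isT_wl h) (isF_wl h') => [w1 _] [w2 _]; rewrite w1 in w2; congruence.
    - by move: (isF_wl h) (isT_wl h') => [w1 _] [w2 _]; rewrite w1 in w2; congruence.
    - by move: (isF_wl h) (isF_wl h') => [w1 _] [w2 _]; rewrite w1 in w2; congruence.
  case: (posnP (\sum_(i < n) ((if asg i then isT phi i (Ka g) (Kb g) else isF phi i (Ka g) (Kb g)) : nat))) => [-> //|hp].
  apply: (leq_trans le1).
  have [i [_ h]] := sum_ex hp.
  case ea: (asg i) h => h.
  - have [_ [j [l hj hc]]] := isT_wl h.
    apply: (@sum_pos _ xpredT _ (Ordinal hj)) => //=.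
    by rewrite (clause_has_sat hc ea) (kC l).1 eqxx.
  - have [_ [j [l hj hc]]] := isF_wl h.
    apply: (@sum_pos _ xpredT _ (Ordinal hj)) => //=.
    by rewrite (clause_has_sat hc ea) (kC l).1 eqxx.
rewrite exchange_big /=.
apply: (@leq_trans (\sum_(j < size phi) (clause_sat asg (clause_at phi j) : nat))).
  apply: leq_sum => j _.
  exact: (lo_count (fun j => clause_sat asg (clause_at phi j))).
by rewrite /num_sat count_idx.
Qed.

Lemma need_pen i : i < n -> need i -> exists g : G, V g /\ pen n phi seat i g.1 g.2.
Proof.
move=> hi hn.
have h1 := AT_le1 i; have h2 := AF_le1 i; have h3 := TF_le3 hi.
move: hn; rewrite /need => hn.
have [[ha hb] | [hab [ht hf]]] : (0 < AT i /\ 0 < AF i) \/ ((0 < AT i + AF i) /\ (0 < TT i /\ 0 < FF i)) by lia.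
- have [g1 [v1 p1]] := sum_ex ha; have [g2 [v2 p2]] := sum_ex hb.
  have [r0 [k [v p]]] := caseB inj top v1 p1 v2 p2.
  have [g [e1 e2]] := mkG v; exists g; by rewrite e1 e2.
- have [gT [vT pT]] := sum_ex ht; have [gF [vF pF]] := sum_ex hf.
  have [g1 [v1 p1]] : exists g1 : G, V g1 /\ (isAT i (Ka g1) (Kb g1) || isAF i (Ka g1) (Kb g1)).
    case: (posnP (AT i)) => ha.
    + have hb : 0 < AF i by lia.
      have [g1 [v1 p1]] := sum_ex hb; exists g1; by rewrite p1 orbT.
    + have [g1 [v1 p1]] := sum_ex ha; exists g1; by rewrite p1.
  have [r0 [k [v p]]] := caseA inj v1 p1 vT pT vF pF.
  have [g [e1 e2]] := mkG v; exists g; by rewrite e1 e2.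
Qed.

Lemma need_le : \sum_(i < n) (need i : nat) <=
  2 * \sum_(g : G | V g) (vv n phi seat g.1 g.2 == (-5)%R : nat).
Proof.
apply: (@leq_trans (\sum_(i < n) \sum_(g : G | V g) (pen n phi seat i g.1 g.2 : nat))).
  apply: leq_sum => i _; case hn: (need i) => //=.
  have [g [v p]] := need_pen (ltn_ord i) hn.
  exact: (@sum_pos _ (fun g : G => V g) (fun g : G => pen n phi seat i g.1 g.2) g v p).
rewrite exchange_big mul2n -addnn -big_split /=; apply: leq_sum => g v.
rewrite /pen; case: (vv n phi seat g.1 g.2 == (-5)%R) => /=; last by rewrite big1.
apply: (@leq_trans (\sum_(i < n) ((XD i (Ka g) : nat) + XD i (Kb g)))).
  by apply: leq_sum => i _; case: (XD i _); case: (XD i _).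
rewrite big_split /=; apply: leq_add; apply: sum_le1 => i i' _ _ h h';
  apply: val_inj; exact: XD_uniq h h'.
Qed.

Lemma pos_le : \sum_(g : G | V g) (vv n phi seat g.1 g.2 == 1%R : nat) <=
  \sum_(i < n) (AT i + AF i + TT i + FF i).
Proof.
apply: (@leq_trans (\sum_(g : G | V g) \sum_(i < n) ((isAT i (Ka g) (Kb g) : nat) +
   isAF i (Ka g) (Kb g) + isT phi i (Ka g) (Kb g) + isF phi i (Ka g) (Kb g)))).
  apply: leq_sum => g v; case e: (vv n phi seat g.1 g.2 == 1%R) => //=.
  have [i hi] := pos_class (eqP e).
  have hin : i < n.
    case/or4P: hi => h.
    - by have [w _] := isAT_wl h; exact: (kX w).2.
    - by have [w _] := isAF_wl h; exact: (kX w).2.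
    - by have [w _] := isT_wl h; exact: (kXT w).2.
    - by have [w _] := isF_wl h; exact: (kXF w).2.
  rewrite (bigD1 (Ordinal hin)) //=.
  by case/or4P: hi => ->; rewrite /=; lia.
rewrite exchange_big /=; apply: leq_sum => i _.
by rewrite /AT /AF /TT /FF -!big_split.
Qed.

Lemma main_nat : \sum_(g : G | V g) (vv n phi seat g.1 g.2 == 1%R : nat) <=
  n + num_sat asg phi + 4 * \sum_(g : G | V g) (vv n phi seat g.1 g.2 == (-5)%R : nat).
Proof.
apply: (leq_trans pos_le).
apply: (@leq_trans (\sum_(i < n) (1 + (if asg i then TT i else FF i) + (need i + need i)))).
  apply: leq_sum => i _.
  have := AT_le1 i; have := AF_le1 i; have := TF_le3 (ltn_ord i).
  rewrite /need /asg; case: (leqP (FF i) (TT i)) => h1;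
  case: (leqP 2 (AT i + AF i + minn (TT i) (FF i))) => h2 /=; lia.
rewrite !big_split /= sum1_card card_ord.
apply: leq_add; first by rewrite leq_add2l; exact: SAT_le.
apply: (leq_trans (leq_add need_le need_le)); by rewrite -mulnDl.
Qed.

End Count.

Lemma split_val (T : finType) (V : pred T) (f : T -> int) :
  (forall x, f x = 1%R \/ f x = 0%R \/ f x = (-5)%R) ->
  (\sum_(x | V x) f x = (\sum_(x | V x) (f x == 1%R : nat))%:Z - 5 * (\sum_(x | V x) (f x == (-5)%R : nat))%:Z)%R.
Proof.
move=> h.
rewrite !(big_morph Posz PoszD (erefl (Posz 0))) mulr_sumr -sumrB.
by apply: eq_bigr => x _; case: (h x) => [->|[->|->]].
Qed.

Unset Implicit Arguments.
Theorem lemma4 (n : nat) (phi : seq clause) (k : nat) :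
  max23sat n phi ->
  (exists sigma : {perm 'I_(2 ^ nprime n)},
      ((k + n)%:Z <= T_value n phi sigma)%R) ->
  exists a : nat -> bool, k <= num_sat a phi.
Proof.
move=> [_ hdeg] [sigma hv].
set N := nprime n in sigma hv.
set seat := seat_of sigma.
have seatE : forall q (hq : q < 2 ^ N), seat q = val ((sigma^-1)%g (Ordinal hq)).
  by move=> q hq; rewrite /seat /seat_of insubT.
have inj : forall q q', q < 2 ^ N -> q' < 2 ^ N -> seat q = seat q' -> q = q'.
  move=> q q' hq hq'; rewrite (seatE q hq) (seatE q' hq') => /val_inj /perm_inj.
  by case.
have top : exists q0, q0 < 2 ^ N /\ seat q0 = 0.
  have h0 : 0 < 2 ^ N by rewrite expn_gt0.
  exists (val (sigma (Ordinal h0))); split; first exact: ltn_ord.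
  rewrite (seatE _ (ltn_ord _)) /=.
  have -> : Ordinal (ltn_ord (sigma (Ordinal h0))) = sigma (Ordinal h0) by apply: val_inj.
  by rewrite permK.
have hn := main_nat inj top hdeg.
exists (asg n phi N seat).
move: hv; rewrite /T_value tv_sum (split_val _ (fun g => gv_cases _ _ _)).
move: hn; rewrite /vv /v_phi.
set P := \sum_(_ | _) _; set Q := \sum_(_ | _) _.
lia.
Qed.
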